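(* Let $\varepsilon>0$ and $d\in\mathbb R$ with $d\ne0$ and $\varepsilon\ell d<2r_0$. Then \[ -\varepsilon^{-1}\Big(\sigma_0\big(\varepsilon\tfrac\ell2d\big)-1\Big)\Big(3\sigma_0\big(\varepsilon\tfrac\ell2d\big)-1\Big)\,d>0 . \]
   Context: $\ell>0$, $r_0=\frac4{27}$. For $r<r_0$, $\sigma_0(r)$ is the largest real root of $\sigma^3-\sigma^2+r=0$ (the real branch with $\sigma_0(0)=1$, written in the paper by Cardano's formula $\sigma_0(r)=\frac13(1+C_-(r)+C_+(r))$, $C_\pm(r)=\frac32(-4r+2r_0\pm4\sqrt{r(r-r_0)})^{1/3}$). The left-hand side is $\mathfrak C_{\varepsilon,0}[d]\,d$ where $\mathfrak C_{\varepsilon,0}$ is the (non dispersive) Cummins operator. *)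

(* Defs.v *)
From HB Require Import structures.
From mathcomp Require Import all_boot all_order all_algebra.
From mathcomp Require Import all_classical all_reals.
Set Implicit Arguments. Unset Strict Implicit. Unset Printing Implicit Defensive.
Import Order.TTheory GRing.Theory Num.Theory.
Local Open Scope ring_scope.
Local Open Scope classical_set_scope.

Definition r0 {R : realType} : R := 4 / 27.

(* sigma_0(r): the largest real root of sigma^3 - sigma^2 + r = 0
   (meaningful for r < r0, where the set of real roots is nonempty,
   finite, hence its supremum is its maximum). *)
Definition sigma0 {R : realType} (r : R) : R :=
  sup [set s : R | s ^+ 3 - s ^+ 2 + r = 0].

(* Main.v *)
Require Import Defs.
From HB Require Import structures.
From mathcomp Require Import all_boot all_order all_algebra.
From mathcomp Require Import all_classical all_reals.
From mathcomp Require Import topology normedtype derive.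
Import numFieldNormedType.Exports.
Local Open Scope classical_set_scope.
Local Open Scope ring_scope.
From mathcomp Require Import ring lra.
Import Order.TTheory GRing.Theory Num.Theory.
Local Open Scope ring_scope.

Section H.
Variable R : realType.

Definition pp (r : R) := ('X^3 - 'X^2 + r%:P : {poly R}).

Lemma pp_eval r s : (pp r).[s] = s ^+ 3 - s ^+ 2 + r.
Proof. by rewrite /pp !hornerE. Qed.

Lemma root_ex (r a b : R) : a <= b -> (pp r).[a] <= 0 <= (pp r).[b] ->
  exists2 c, a <= c <= b & c ^+ 3 - c ^+ 2 + r = 0.
Proof.
move=> ab /andP[ha hb].
have hc : {within `[a, b], continuous (horner (pp r))}.
  apply: continuous_subspaceT => x; exact: continuous_horner.
have hm : Num.min (pp r).[a] (pp r).[b] <= 0 <= Num.max (pp r).[a] (pp r).[b].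
  by rewrite ge_min ha /= le_max hb orbT.
have [c cin fc] := @IVT R (horner (pp r)) a b 0 ab hc hm.
- exists c; first by rewrite in_itv /= in cin.
  by rewrite -pp_eval.
Qed.

Lemma sig_eq (r c : R) : 2/3 <= c -> c ^+ 3 - c ^+ 2 + r = 0 -> sigma0 r = c.
Proof.
move=> hc pc.
have ub : ubound [set s : R | s ^+ 3 - s ^+ 2 + r = 0] c.
  move=> s /= ps; rewrite leNgt; apply/negP => cs.
  have : 0 < (s ^+ 3 - s ^+ 2 + r) - (c ^+ 3 - c ^+ 2 + r).
    have -> : (s ^+ 3 - s ^+ 2 + r) - (c ^+ 3 - c ^+ 2 + r)
       = (s - c) * (s^+2 + s * c + c ^+ 2 - s - c) by ring.
    apply: mulr_gt0; first by rewrite subr_gt0.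
    nra.
  by rewrite ps pc subrr ltxx.
apply/le_anti/andP; split.
  by apply: ge_sup => //; exists c.
by apply: sup_upper_bound => //; split; [exists c | exists c].
Qed.

Lemma sig_pos (r : R) : 0 < r -> r < r0 -> 2/3 < sigma0 r < 1.
Proof.
rewrite /r0 => r0' rr.
have h1 : (2/3 : R) <= 1 by lra.
have h2 : (pp r).[2/3] <= 0 <= (pp r).[1].
  rewrite !pp_eval; apply/andP; split; lra.
have [c /andP[c1 c2] pc] := @root_ex r (2/3) 1 h1 h2.
rewrite (@sig_eq r c c1 pc).
have c1' : c != 1 by apply/eqP => e; move: pc; rewrite e; lra.
have c2' : c != 2/3 by apply/eqP => e; move: pc; rewrite e; lra.
apply/andP; split; rewrite lt_neqAle ?c1 ?c2 ?andbT; [by rewrite eq_sym|by []].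
Qed.

Lemma sig_neg (r : R) : r < 0 -> 1 < sigma0 r.
Proof.
move=> rn.
have h1 : 1 <= 1 - r by lra.
have h2 : (pp r).[1] <= 0 <= (pp r).[1 - r].
  rewrite !pp_eval; apply/andP; split; first by lra.
  nra.
have [c /andP[c1 c2] pc] := @root_ex r 1 (1 - r) h1 h2.
have c1' : c != 1 by apply/eqP => e; move: pc; rewrite e; lra.
have c0 : (2/3 : R) <= c by lra.
rewrite (@sig_eq r c c0 pc).
by rewrite lt_neqAle eq_sym c1' c1.
Qed.

End H.

Theorem lemma4p13 (R : realType) (ell eps d : R) :
  0 < ell -> 0 < eps -> d != 0 -> eps * ell * d < 2 * r0 ->
  0 < - eps^-1 * (sigma0 (eps * (ell / 2) * d) - 1)
        * (3 * sigma0 (eps * (ell / 2) * d) - 1) * d.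
Proof.
move=> hl he hd hr.
have ei : 0 < eps^-1 by rewrite invr_gt0.
have eq : eps * (ell / 2) * d = (eps * ell * d) / 2 by rewrite mulrA mulrAC.
rewrite eq; set s := sigma0 _.
have [dn|dp] := ltP d 0.
  have rn : eps * ell * d / 2 < 0.
    rewrite pmulr_llt0 ?invr_gt0 // pmulr_rlt0 //; exact: mulr_gt0.
  have := @sig_neg R _ rn; rewrite -/s => hs.
  have : 0 < (s - 1) * (3 * s - 1) by apply: mulr_gt0; clear - hs; lra.
  move=> h.
  have -> : - eps^-1 * (s - 1) * (3 * s - 1) * d
     = (eps^-1 * ((s - 1) * (3 * s - 1))) * (- d) by ring.
  apply: mulr_gt0; [exact: mulr_gt0 | by rewrite oppr_gt0].
have dp' : 0 < d by rewrite lt_neqAle eq_sym hd dp.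
have rp : 0 < eps * ell * d / 2.
  by rewrite divr_gt0 // mulr_gt0 // mulr_gt0.
have rl : eps * ell * d / 2 < r0.
  move: hr; rewrite /r0; clear; set x := eps * ell * d; lra.
have /andP[h1 h2] := @sig_pos R _ rp rl; rewrite -/s in h1 h2.
have h : 0 < (1 - s) * (3 * s - 1) by apply: mulr_gt0; clear - h1 h2; lra.
have -> : - eps^-1 * (s - 1) * (3 * s - 1) * d
     = (eps^-1 * ((1 - s) * (3 * s - 1))) * d by ring.
apply: mulr_gt0 => //; exact: mulr_gt0.
Qed.
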